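(* Let $\Delta>0$, $h>0$, $\alpha\ge 2$, $\mathrm{psd}_{\max}>0$, $\sigma^2>0$. For integers $i,j$ with $i\equiv j \pmod 2$ place a satellite at $\mathbf{s}_{i,j}=(i\Delta/2,\ j\Delta\sqrt3/2,\ h)$, and consider a ground user at $\mathbf{g}=(x,y,0)$, served by the satellite $\mathbf{s}_{0,0}$. Define $D_{i,j}(x,y)=\|\mathbf{s}_{i,j}-\mathbf{g}\|$, $\theta_{i,j}(x,y)=\cos^{-1}\bigl(h/D_{i,j}(x,y)\bigr)$, and $W_{i,j}(x,y)=w_s(\theta_{i,j}(x,y))\,w_g(\theta_{i,j}(x,y))$, where $w_s,w_g:[0,\pi]\to(0,1]$ are the (normalized) satellite and ground antenna patterns. Let $\mathcal{I}=\{(i,j)\in\mathbb{Z}^2: i\equiv j \pmod 2\}\setminus\{(0,0)\}$ and $$\mathrm{SNR}(x,y)=\frac{\mathrm{psd}_{\max}}{\sigma^2}D_{0,0}^{-\alpha}(x,y)W_{0,0}(x,y),\quad \mathrm{INR}(x,y)=\frac{\mathrm{psd}_{\max}}{\sigma^2}\sum_{(i,j)\in\mathcal{I}}D_{i,j}^{-\alpha}(x,y)W_{i,j}(x,y),$$ (assumed finite), and $\mathrm{SINR}(x,y)=\mathrm{SNR}(x,y)/(\mathrm{INR}(x,y)+1)$. Suppose (1) $\theta\mapsto w_s(\theta)w_g(\theta)$ is monotone decreasing on $[0,\pi]$, and (2) for every $(i,j)$ with $i\equiv j\pmod 2$, the ratio $W_{i,j}(x,y)/W_{0,0}(x,y)$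 is convex in $x$ and convex in $y$ on the region $-\Delta/2\le x\le\Delta/2$, $-\Delta\sqrt3/2\le y\le \Delta\sqrt3/2$. Then $\mathrm{SINR}(x,y)$ is maximized over $(x,y)\in\mathbb{R}^2$ at $(x,y)=(0,0)$.
   Context: Planar model of a LEO downlink: satellites lie on a hexagonal lattice in the plane at altitude $h$ above the ground plane, all satellite antennas point straight down and all ground antennas point straight up, so the off-axis angle at both ends of a link is $\theta_{i,j}(x,y)$. All satellites transmit at power spectral density $\mathrm{psd}_{\max}$. *)

(* Defs.v *)
From mathcomp Require Import all_boot all_order all_algebra.
From mathcomp Require Import all_classical all_reals all_analysis.
Set Implicit Arguments. Unset Strict Implicit. Unset Printing Implicit Defensive.
Import Order.TTheory GRing.Theory Num.Theory.
Local Open Scope ring_scope.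
Local Open Scope classical_set_scope.

Section Model.
Variable R : realType.

Definition sat_x (Delta : R) (i : int) : R := i%:~R * Delta / 2.
Definition sat_y (Delta : R) (j : int) : R := j%:~R * Delta * Num.sqrt 3 / 2.

Definition Dist (Delta h : R) (i j : int) (x y : R) : R :=
  Num.sqrt ((sat_x Delta i - x) ^+ 2 + (sat_y Delta j - y) ^+ 2 + h ^+ 2).

Definition theta (Delta h : R) (i j : int) (x y : R) : R :=
  acos (h / Dist Delta h i j x y).

Definition Wgain (ws wg : R -> R) (Delta h : R) (i j : int) (x y : R) : R :=
  ws (theta Delta h i j x y) * wg (theta Delta h i j x y).

Definition lattice : set (int * int) :=
  [set p | (p.1 - p.2 = 0 %[mod 2])%Z].

Definition interferers : set (int * int) := lattice `\ (0%Z, 0%Z).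

Definition SNR (psd sigma2 alpha : R) (ws wg : R -> R) (Delta h : R) (x y : R) : R :=
  psd / sigma2 * (powR (Dist Delta h 0 0 x y) (- alpha) * Wgain ws wg Delta h 0 0 x y).

(* the interference sum, as an extended real (sum of nonnegative terms) *)
Definition INR_sum (psd sigma2 alpha : R) (ws wg : R -> R) (Delta h : R) (x y : R)
  : \bar R :=
  (\esum_(p in interferers)
     (psd / sigma2 * (powR (Dist Delta h p.1 p.2 x y) (- alpha)
                        * Wgain ws wg Delta h p.1 p.2 x y))%:E)%E.

Definition INR (psd sigma2 alpha : R) (ws wg : R -> R) (Delta h : R) (x y : R) : R :=
  fine (INR_sum psd sigma2 alpha ws wg Delta h x y).

Definition SINR (psd sigma2 alpha : R) (ws wg : R -> R) (Delta h : R) (x y : R) : R :=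
  SNR psd sigma2 alpha ws wg Delta h x y / (INR psd sigma2 alpha ws wg Delta h x y + 1).

Definition convex_on (f : R -> R) (a b : R) : Prop :=
  forall u v t : R, a <= u <= b -> a <= v <= b -> 0 <= t <= 1 ->
    f (t * u + (1 - t) * v) <= t * f u + (1 - t) * f v.

End Model.

(* Main.v *)
Require Import Defs.
From mathcomp Require Import all_boot all_order all_algebra.
From mathcomp Require Import all_classical all_reals all_analysis.
From mathcomp Require Import ring lra zify.
Import Order.TTheory GRing.Theory Num.Theory.
Local Open Scope ring_scope.
Local Open Scope classical_set_scope.

Definition Gf {R : realType} (ws wg : R -> R) (h d : R) :=
  ws (acos (h / d)) * wg (acos (h / d)).
Definition Ff {R : realType} (psd sigma2 alpha : R) (ws wg : R -> R) (h d : R) :=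
  psd / sigma2 * (powR d (- alpha) * Gf ws wg h d).

Lemma WgainE {R : realType} (ws wg : R -> R) Delta h i j x y :
  Wgain ws wg Delta h i j x y = Gf ws wg h (Dist Delta h i j x y).
Proof. by []. Qed.

Lemma termE {R : realType} (psd sigma2 alpha : R) ws wg Delta h i j x y :
  psd / sigma2 * (powR (Dist Delta h i j x y) (- alpha) * Wgain ws wg Delta h i j x y)
  = Ff psd sigma2 alpha ws wg h (Dist Delta h i j x y).
Proof. by []. Qed.

Lemma Dist_sqr {R : realType} (Delta h : R) i j x y :
  Dist Delta h i j x y ^+ 2 =
  (sat_x Delta i - x) ^+ 2 + (sat_y Delta j - y) ^+ 2 + h ^+ 2.
Proof. by rewrite /Dist sqr_sqrtr // !addr_ge0 // sqr_ge0. Qed.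

Lemma Dist_ge {R : realType} (Delta h : R) i j x y : 0 < h ->
  h <= Dist Delta h i j x y.
Proof.
move=> h0; have := Dist_sqr Delta h i j x y.
have : 0 <= Dist Delta h i j x y by rewrite sqrtr_ge0.
set D := Dist _ _ _ _ _ _ => D0 DE.
have : h ^+ 2 <= D ^+ 2 by rewrite DE lerDr addr_ge0 ?sqr_ge0.
move=> H; nra.
Qed.

Lemma acos_anti {R : realType} (u v : R) : -1 <= u -> u <= v -> v <= 1 ->
  acos v <= acos u.
Proof.
move=> u1 uv v1; rewrite leNgt; apply/negP => lt.
have hu : -1 <= u <= 1 by rewrite u1 (le_trans uv v1).
have hv : -1 <= v <= 1 by rewrite v1 (le_trans u1 uv).
have := @ltr_cos R (acos u) (acos v).
rewrite !in_itv /= !acos_ge0 // !acos_lepi // => /(_ isT isT).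
idtac.
move=> e; move: lt; rewrite -e !acosK ?in_itv //=; by rewrite ltNge uv.
Qed.

Lemma hdiv_bounds {R : realType} (h d : R) : 0 < h -> h <= d ->
  -1 <= h / d <= 1.
Proof.
move=> h0 hd; have d0 : 0 < d by apply: lt_le_trans hd.
apply/andP; split.
  by apply: (@le_trans _ _ 0); [rewrite lerN10|rewrite divr_ge0 // ltW].
by rewrite ler_pdivrMr // mul1r.
Qed.

Lemma theta_bounds {R : realType} (h d : R) : 0 < h -> h <= d ->
  0 <= acos (h / d) <= pi.
Proof. by move=> h0 hd; rewrite acos_ge0 ?acos_lepi ?hdiv_bounds. Qed.

Lemma G_pos {R : realType} (ws wg : R -> R) (h d : R)
  (hws : forall t, 0 <= t <= pi -> 0 < ws t <= 1)
  (hwg : forall t, 0 <= t <= pi -> 0 < wg t <= 1) :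
  0 < h -> h <= d -> 0 < Gf ws wg h d.
Proof.
move=> h0 hd; have tb := theta_bounds _ _ h0 hd.
have /andP[a _] := hws _ tb; have /andP[b _] := hwg _ tb.
by rewrite /Gf mulr_gt0.
Qed.

Lemma G_anti {R : realType} (ws wg : R -> R) (h d1 d2 : R)
  (hmono : forall a b : R, 0 <= a -> a <= b -> b <= pi ->
     ws b * wg b <= ws a * wg a) :
  0 < h -> h <= d1 -> d1 <= d2 -> Gf ws wg h d2 <= Gf ws wg h d1.
Proof.
move=> h0 hd1 d12; have hd2 := le_trans hd1 d12.
have /andP[t1 _] := theta_bounds _ _ h0 hd1.
have /andP[_ t2] := theta_bounds _ _ h0 hd2.
have /andP[b1 _] := hdiv_bounds _ _ h0 hd2.
have /andP[_ b2] := hdiv_bounds _ _ h0 hd1.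
apply: hmono => //; apply: acos_anti => //.
have d10 : 0 < d1 by apply: lt_le_trans hd1.
by rewrite ler_pM2l // lef_pV2 ?posrE ?(lt_le_trans d10).
Qed.

Lemma powR_anti {R : realType} (a d1 d2 : R) : 0 <= a -> 0 < d1 -> d1 <= d2 ->
  powR d2 (- a) <= powR d1 (- a).
Proof.
move=> a0 d10 d12; have d20 := lt_le_trans d10 d12.
rewrite !powRN lef_pV2 ?posrE ?powR_gt0 //.
by apply: ge0_ler_powR => //; rewrite nnegrE ltW.
Qed.

Lemma Dist00 {R : realType} (Delta h : R) : 0 < h -> Dist Delta h 0 0 0 0 = h.
Proof.
move=> h0; rewrite /Dist /sat_x /sat_y !mul0r !subr0 expr0n /= !add0r.
by rewrite sqrtr_sqr ger0_norm // ltW.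
Qed.

Lemma F_pos {R : realType} (psd sigma2 alpha : R) (ws wg : R -> R) (h d : R)
  (hws : forall t, 0 <= t <= pi -> 0 < ws t <= 1)
  (hwg : forall t, 0 <= t <= pi -> 0 < wg t <= 1) :
  0 < psd -> 0 < sigma2 -> 0 < h -> h <= d -> 0 < Ff psd sigma2 alpha ws wg h d.
Proof.
move=> p0 s0 h0 hd; rewrite /Ff mulr_gt0 ?divr_gt0 // mulr_gt0 ?G_pos //.
by rewrite powR_gt0 // (lt_le_trans h0).
Qed.

Lemma F_anti {R : realType} (psd sigma2 alpha : R) (ws wg : R -> R) (h d1 d2 : R)
  (hws : forall t, 0 <= t <= pi -> 0 < ws t <= 1)
  (hwg : forall t, 0 <= t <= pi -> 0 < wg t <= 1)
  (hmono : forall a b : R, 0 <= a -> a <= b -> b <= pi ->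
     ws b * wg b <= ws a * wg a) :
  0 < psd -> 0 < sigma2 -> 0 <= alpha -> 0 < h -> h <= d1 -> d1 <= d2 ->
  Ff psd sigma2 alpha ws wg h d2 <= Ff psd sigma2 alpha ws wg h d1.
Proof.
move=> p0 s0 a0 h0 hd1 d12; have hd2 := le_trans hd1 d12.
rewrite /Ff ler_pM2l ?divr_gt0 //.
apply: ler_pM.
- exact: powR_ge0.
- exact: ltW (G_pos _ _ _ _ hws hwg h0 hd2).
- by apply: powR_anti => //; apply: lt_le_trans hd1.
- exact: G_anti.
Qed.


Lemma bernoulliN {R : realType} (k z : R) : 0 <= k -> 0 < z ->
  1 - k * (z - 1) <= powR z (- k).
Proof.
move=> k0 z0; rewrite /powR gt_eqF //.
have l1 : ln z <= z - 1.
  have := expR_ge1Dx (ln z); rewrite lnK ?posrE // => H; lra.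
apply: le_trans (expR_ge1Dx _); rewrite mulNr; nra.
Qed.

Lemma tangent_powR {R : realType} (k m t : R) : 0 <= k -> 0 < m -> 0 < t ->
  powR m (- k) * (1 - k * (t / m - 1)) <= powR t (- k).
Proof.
move=> k0 m0 t0.
have -> : t = m * (t / m) by rewrite mulrC divfK // gt_eqF.
rewrite powRM ?(ltW m0) ?(ltW (divr_gt0 t0 m0)) //.
have -> : m * (t / m) / m = t / m by field; rewrite gt_eqF.
by rewrite ler_pM2l ?powR_gt0 // bernoulliN // divr_gt0.
Qed.

Lemma jensen4 {R : realType} (k t1 t2 t3 t4 : R) : 0 <= k ->
  0 < t1 -> 0 < t2 -> 0 < t3 -> 0 < t4 ->
  4 * powR ((t1 + t2 + t3 + t4) / 4) (- k) <=
  powR t1 (- k) + powR t2 (- k) + powR t3 (- k) + powR t4 (- k).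
Proof.
move=> k0 h1 h2 h3 h4; set m := (t1 + t2 + t3 + t4) / 4.
have m0 : 0 < m by rewrite /m divr_gt0 // !addr_gt0.
have e1 := tangent_powR _ _ _ k0 m0 h1; have e2 := tangent_powR _ _ _ k0 m0 h2.
have e3 := tangent_powR _ _ _ k0 m0 h3; have e4 := tangent_powR _ _ _ k0 m0 h4.
have s : t1 / m + t2 / m + t3 / m + t4 / m = 4.
  rewrite /m; field. rewrite gt_eqF // !addr_gt0 //.
set P := powR m (- k).
have E : P * (1 - k * (t1 / m - 1)) + P * (1 - k * (t2 / m - 1)) +
       P * (1 - k * (t3 / m - 1)) + P * (1 - k * (t4 / m - 1)) =
       P * (4 - k * (t1 / m + t2 / m + t3 / m + t4 / m - 4)) by ring.
rewrite s subrr mulr0 subr0 in E.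
have := lerD (lerD (lerD e1 e2) e3) e4; rewrite E mulrC //.
Qed.

Lemma cheb4 {R : realType} (a1 a2 a3 a4 b1 b2 b3 b4 : R) :
  0 <= (a1 - a2) * (b1 - b2) -> 0 <= (a1 - a3) * (b1 - b3) ->
  0 <= (a1 - a4) * (b1 - b4) -> 0 <= (a2 - a3) * (b2 - b3) ->
  0 <= (a2 - a4) * (b2 - b4) -> 0 <= (a3 - a4) * (b3 - b4) ->
  (a1 + a2 + a3 + a4) * (b1 + b2 + b3 + b4) <=
  4 * (a1 * b1 + a2 * b2 + a3 * b3 + a4 * b4).
Proof. move=> *; nra. Qed.

Lemma comono {R : realType} (f g : R -> R) (u v : R) :
  (u <= v -> f v <= f u /\ g v <= g u) ->
  (v <= u -> f u <= f v /\ g u <= g v) ->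
  0 <= (f u - f v) * (g u - g v).
Proof.
move=> H1 H2; case: (leP u v) => uv.
  by have [a b] := H1 uv; rewrite mulr_ge0 // subr_ge0.
by have [a b] := H2 (ltW uv); rewrite -mulrNN !opprB mulr_ge0 // subr_ge0.
Qed.

Lemma powR_sqrt_sq {R : realType} (d a : R) : 0 <= d ->
  powR d (- a) = powR (d ^+ 2) (- (a / 2)).
Proof.
move=> d0; rewrite -powR_mulrn // -powRrM; congr powR.
by rewrite mulrN mulrC divfK // pnatr_eq0.
Qed.


Lemma esum_scale {R : realType} {T : choiceType} (S : set T) (k : R) (f : T -> \bar R) :
  (0 < k)%R -> (forall i, (0 <= f i)%E) ->
  (\esum_(i in S) (k%:E * f i) = k%:E * \esum_(i in S) f i)%E.
Proof.
move=> k0 f0; rewrite /esum -ereal_sup_pZl //; congr ereal_sup.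
apply/seteqP; split => z.
- case=> A HA <-; exists (\sum_(x \in A) f x)%E; first by exists A.
  by rewrite ge0_mule_fsumr.
- case=> _ [A HA <-] <-; exists A => //; by rewrite ge0_mule_fsumr.
Qed.

Lemma esum_split1 {R : realType} {T : choiceType} (L : set T) (q : T) (f : T -> \bar R) :
  L q -> (forall i, L i -> (0 <= f i)%E) ->
  (\esum_(i in L) f i = f q + \esum_(i in L `\ q) f i)%E.
Proof.
move=> Lq f0; rewrite (esumID [set q]) //.
have -> : L `&` [set q] = [set q].
  by apply/seteqP; split => x /=; [case => _ ->|move=> ->].
by rewrite esum_set1 ?f0 // setDE.
Qed.

Lemma lat_dvd (i j : int) : (i - j = 0 %[mod 2])%Z <-> (2 %| i - j)%Z.
Proof.
split => [/eqP|H]; first by rewrite eqz_mod_dvd subr0.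
by apply/eqP; rewrite eqz_mod_dvd subr0.
Qed.

Lemma lat_negx (i j : int) : (i - j = 0 %[mod 2])%Z -> (- i - j = 0 %[mod 2])%Z.
Proof.
move=> /lat_dvd H; apply/lat_dvd.
have -> : - i - j = (i - j) - (2 * i)%R by ring.
by apply: rpredB => //; apply: dvdz_mulr; exact: dvdzz.
Qed.

Lemma lat_negy (i j : int) : (i - j = 0 %[mod 2])%Z -> (i - - j = 0 %[mod 2])%Z.
Proof.
move=> /lat_dvd H; apply/lat_dvd.
have -> : i - - j = (i - j) + (2 * j)%R by ring.
by apply: rpredD => //; apply: dvdz_mulr; exact: dvdzz.
Qed.

Lemma lat_sub (i j a b : int) : (i - j = 0 %[mod 2])%Z -> (a - b = 0 %[mod 2])%Z ->
  ((i - a) - (j - b) = 0 %[mod 2])%Z.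
Proof.
move=> /lat_dvd H1 /lat_dvd H2; apply/lat_dvd.
have -> : (i - a) - (j - b) = (i - j) - (a - b) by ring.
exact: rpredB.
Qed.

Definition rx (p : int * int) : int * int := (- p.1, p.2).
Definition ry (p : int * int) : int * int := (p.1, - p.2).

Lemma bij_inv {T : Type} (A : set T) (e : T -> T) :
  (forall x, A x -> A (e x)) -> (forall x, e (e x) = x) -> set_bij A A e.
Proof.
move=> hA hinv; split.
- by move=> x /hA.
- by move=> x y _ _ E; rewrite -(hinv x) E hinv.
- by move=> y Ay; exists (e y); [exact: hA | exact: hinv].
Qed.

Lemma interf_rx : set_bij interferers interferers rx.
Proof.
apply: bij_inv; last by case=> i j; rewrite /rx /= opprK.
case=> i j [/= L N]; split; first exact: lat_negx.
by move=> [E1 E2]; apply: N; rewrite -[i]opprK E1 E2.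
Qed.

Lemma interf_ry : set_bij interferers interferers ry.
Proof.
apply: bij_inv; last by case=> i j; rewrite /ry /= opprK.
case=> i j [/= L N]; split; first exact: lat_negy.
by move=> [E1 E2]; apply: N; rewrite -[j]opprK E1 E2.
Qed.


Lemma Dist_rx {R : realType} (Delta h : R) i j x y :
  Dist Delta h (- i) j x y = Dist Delta h i j (- x) y.
Proof.
rewrite /Dist /sat_x; congr Num.sqrt; rewrite mulrNz; ring.
Qed.

Lemma Dist_ry {R : realType} (Delta h : R) i j x y :
  Dist Delta h i (- j) x y = Dist Delta h i j x (- y).
Proof.
rewrite /Dist /sat_y; congr Num.sqrt; rewrite mulrNz; ring.
Qed.

Lemma Dist_tr {R : realType} (Delta h : R) i j a b x y :
  Dist Delta h i j x y =
  Dist Delta h (i - a) (j - b) (x - sat_x Delta a) (y - sat_y Delta b).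
Proof.
rewrite /Dist /sat_x /sat_y; congr Num.sqrt; rewrite !intrD !intrN; ring.
Qed.

Lemma convex_mid {R : realType} (f : R -> R) (a b x : R) :
  convex_on f a b -> a <= x <= b -> a <= - x <= b -> f 0 <= (f x + f (- x)) / 2.
Proof.
move=> C hx hnx.
have := C x (- x) (1 / 2) hx hnx.
rewrite (_ : 1 / 2 * x + (1 - 1 / 2) * - x = 0); last by field.
rewrite (_ : 1 - 1 / 2 = 1 / 2 :> R); last by field.
move=> H; apply: (le_trans (H _)); first by rewrite divr_ge0 //= ler_pdivrMr // mul1r ler1n.
by rewrite -mulrDr mulrC mul1r.
Qed.

Lemma subr_ge0_R {R : realType} (a b : R) : a <= b -> 0 <= b - a.
Proof. by rewrite subr_ge0. Qed.

Lemma sat0x {R : realType} (Delta : R) : sat_x Delta 0 = 0.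
Proof. by rewrite /sat_x !mul0r. Qed.
Lemma sat0y {R : realType} (Delta : R) : sat_y Delta 0 = 0.
Proof. by rewrite /sat_y !mul0r. Qed.

Lemma cell_term {R : realType} (Delta h alpha psd sigma2 : R)
  (ws wg : R -> R)
  (hDelta : 0 < Delta) (hh : 0 < h) (halpha : 2 <= alpha)
  (hpsd : 0 < psd) (hsigma : 0 < sigma2)
  (hws : forall t, 0 <= t <= pi -> 0 < ws t <= 1)
  (hwg : forall t, 0 <= t <= pi -> 0 < wg t <= 1)
  (hmono : forall a b : R, 0 <= a -> a <= b -> b <= pi ->
     ws b * wg b <= ws a * wg a)
  (hconvx : forall i j : int, (i - j = 0 %[mod 2])%Z ->
     forall y : R, - (Delta * Num.sqrt 3 / 2) <= y <= Delta * Num.sqrt 3 / 2 ->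
     convex_on (fun x => Wgain ws wg Delta h i j x y / Wgain ws wg Delta h 0 0 x y)
               (- (Delta / 2)) (Delta / 2))
  (hconvy : forall i j : int, (i - j = 0 %[mod 2])%Z ->
     forall x : R, - (Delta / 2) <= x <= Delta / 2 ->
     convex_on (fun y => Wgain ws wg Delta h i j x y / Wgain ws wg Delta h 0 0 x y)
               (- (Delta * Num.sqrt 3 / 2)) (Delta * Num.sqrt 3 / 2))
  (i j : int) (L : (i - j = 0 %[mod 2])%Z) (x y : R)
  (hx : - (Delta / 2) <= x <= Delta / 2)
  (hy : - (Delta * Num.sqrt 3 / 2) <= y <= Delta * Num.sqrt 3 / 2) :
  4 * Ff psd sigma2 alpha ws wg h (Dist Delta h 0 0 x y) *
      Ff psd sigma2 alpha ws wg h (Dist Delta h i j 0 0) <=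
  Ff psd sigma2 alpha ws wg h h *
   (Ff psd sigma2 alpha ws wg h (Dist Delta h i j x y) +
    Ff psd sigma2 alpha ws wg h (Dist Delta h i j (- x) y) +
    Ff psd sigma2 alpha ws wg h (Dist Delta h i j x (- y)) +
    Ff psd sigma2 alpha ws wg h (Dist Delta h i j (- x) (- y))).
Proof.
have hnx : - (Delta / 2) <= - x <= Delta / 2.
  by move: hx => /andP[? ?]; apply/andP; split; lra.
have hny : - (Delta * Num.sqrt 3 / 2) <= - y <= Delta * Num.sqrt 3 / 2.
  by move: hy => /andP[? ?]; apply/andP; split; lra.
have h0x : - (Delta / 2) <= 0 <= Delta / 2.
  by apply/andP; split; rewrite ?oppr_le0 divr_ge0 // ltW.
set G := Gf ws wg h.
set d1 := Dist Delta h i j x y; set d2 := Dist Delta h i j (- x) y.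
set d3 := Dist Delta h i j x (- y); set d4 := Dist Delta h i j (- x) (- y).
set D0 := Dist Delta h 0 0 x y; set Dp := Dist Delta h i j 0 0.
have eD2 : Dist Delta h 0 0 (- x) y = D0 by rewrite -Dist_rx oppr0.
have eD3 : Dist Delta h 0 0 x (- y) = D0 by rewrite -Dist_ry oppr0.
have eD4 : Dist Delta h 0 0 (- x) (- y) = D0 by rewrite -Dist_ry -Dist_rx !oppr0.
have hd1 : h <= d1 by exact: Dist_ge. have hd2 : h <= d2 by exact: Dist_ge.
have hd3 : h <= d3 by exact: Dist_ge. have hd4 : h <= d4 by exact: Dist_ge.
have hD0 : h <= D0 by exact: Dist_ge. have hDp : h <= Dp by exact: Dist_ge.
have Gpos : forall d, h <= d -> 0 < G d by move=> d; exact: G_pos.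
have CV : 4 * (G Dp / G h) <= (G d1 + G d2 + G d3 + G d4) / G D0.
  have c1 := convex_mid _ _ _ _ (hconvx i j L y hy) hx hnx.
  have c2 := convex_mid _ _ _ _ (hconvx i j L (- y) hny) hx hnx.
  have c3 := convex_mid _ _ _ _ (hconvy i j L 0 h0x) hy hny.
  move: c1 c2 c3; rewrite /= !WgainE.
  rewrite -/d1 -/d2 -/d3 -/d4 -/D0 eD2 eD3 eD4.
  rewrite Dist00 // -/G -/Dp; rewrite !mulrDl; lra.
set k := alpha / 2.
have a0 : 0 <= alpha by apply: le_trans halpha.
have k0 : 0 <= k by rewrite divr_ge0.
have hpos : forall d, h <= d -> 0 < d by move=> d; apply: lt_le_trans.
set P := fun d => powR d (- alpha).
have Ppos : forall d, h <= d -> 0 < P d by move=> d hd; rewrite /P powR_gt0 // hpos.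
have Psq : forall d, h <= d -> P d = powR (d ^+ 2) (- k).
  by move=> d hd; rewrite /P powR_sqrt_sq // ltW // hpos.
have CM : forall u v, h <= u -> h <= v -> 0 <= (P u - P v) * (G u - G v).
  move=> u v hu hv; apply: comono => uv; split.
  - by apply: powR_anti => //; apply: hpos.
  - exact: G_anti.
  - by apply: powR_anti => //; apply: hpos.
  - exact: G_anti.
have CH := @cheb4 _ _ _ _ _ _ _ _ _ (CM _ _ hd1 hd2) (CM _ _ hd1 hd3) (CM _ _ hd1 hd4)
   (CM _ _ hd2 hd3) (CM _ _ hd2 hd4) (CM _ _ hd3 hd4).
set m := D0 ^+ 2 + Dp ^+ 2 - h ^+ 2.
have EQm : (d1 ^+ 2 + d2 ^+ 2 + d3 ^+ 2 + d4 ^+ 2) / 4 = m.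
  rewrite /m /d1 /d2 /d3 /d4 /D0 /Dp !Dist_sqr !sat0x !sat0y; by field.
have JS : 4 * powR m (- k) <= P d1 + P d2 + P d3 + P d4.
  rewrite !Psq // -EQm; apply: jensen4 => //; apply: exprn_gt0; exact: hpos.
have hm : h ^+ 2 * m <= D0 ^+ 2 * Dp ^+ 2.
  have : h ^+ 2 <= D0 ^+ 2 by rewrite !expr2; apply: ler_pM => //; rewrite ltW.
  have : h ^+ 2 <= Dp ^+ 2 by rewrite !expr2; apply: ler_pM => //; rewrite ltW.
  rewrite /m => H1 H2.
  have := mulr_ge0 (subr_ge0_R _ _ H1) (subr_ge0_R _ _ H2).
  move: (D0 ^+ 2) (Dp ^+ 2) (h ^+ 2) => A B C; lra.
have hm0 : 0 < h ^+ 2 * m.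
  rewrite /m mulr_gt0 ?exprn_gt0 //.
  have : h ^+ 2 <= D0 ^+ 2 by rewrite !expr2; apply: ler_pM => //; rewrite ltW.
  have : 0 < Dp ^+ 2 by rewrite exprn_gt0 ?hpos.
  lra.
have PP : P D0 * P Dp <= P h * powR m (- k).
  have m0 : 0 < m by move: hm0; rewrite pmulr_rgt0 // exprn_gt0.
  rewrite !Psq //.
  rewrite -(powRM _ (sqr_ge0 D0) (sqr_ge0 Dp)) -(powRM _ (sqr_ge0 h) (ltW m0)).
  by apply: powR_anti.
have FE : forall d, Ff psd sigma2 alpha ws wg h d = psd / sigma2 * (P d * G d) by [].
rewrite !FE.
have c0 : 0 < psd / sigma2 by rewrite divr_gt0.
have GD0 := Gpos _ hD0; have GDp := Gpos _ hDp; have Gh := Gpos _ (lexx h).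
have PD0 := Ppos _ hD0; have PDp := Ppos _ hDp; have Ph := Ppos _ (lexx h).
have Pm : 0 < powR m (- k).
  by rewrite powR_gt0 //; move: hm0; rewrite pmulr_rgt0 // exprn_gt0.
move: CV; rewrite ler_pdivlMr // => CV.
have I1 : 4 * G Dp * G D0 <= G h * (G d1 + G d2 + G d3 + G d4).
  have -> : 4 * G Dp * G D0 = G h * (4 * (G Dp / G h) * G D0).
    by field; rewrite gt_eqF.
  by rewrite ler_wpM2l // ltW.
move: CH JS PP I1.
set SA := P d1 + P d2 + P d3 + P d4.
set SB := G d1 + G d2 + G d3 + G d4.
set T := P d1 * G d1 + P d2 * G d2 + P d3 * G d3 + P d4 * G d4.
move=> CH JS PP I1.
have s1 : P h * G h * (SA * SB) <= P h * G h * (4 * T).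
  by rewrite ler_wpM2l // mulr_ge0 // ltW.
have SA0 : 0 <= SA by apply: le_trans JS; rewrite mulr_ge0 // ltW.
have s2 : P h * SA * (4 * G Dp * G D0) <= P h * SA * (G h * SB).
  by rewrite ler_wpM2l // mulr_ge0 // ltW.
have s3 : P h * (4 * powR m (- k)) * (G Dp * G D0) <= P h * SA * (G Dp * G D0).
  apply: ler_wpM2r; first by rewrite mulr_ge0 // ltW.
  by apply: ler_wpM2l => //; rewrite ltW.
have s4 : 4 * (P D0 * P Dp) * (G Dp * G D0) <= 4 * (P h * powR m (- k)) * (G Dp * G D0).
  apply: ler_wpM2r; first by rewrite mulr_ge0 // ltW.
  by apply: ler_wpM2l.
have H : 4 * (P D0 * P Dp) * (G Dp * G D0) <= P h * G h * T.
  apply: le_trans s4 _.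
  rewrite (_ : 4 * (P h * powR m (- k)) * (G Dp * G D0) =
     P h * (4 * powR m (- k)) * (G Dp * G D0)); last by ring.
  apply: le_trans s3 _.
  apply: (@le_trans _ _ (P h * SA * (G h * SB) / 4)).
    rewrite (_ : P h * SA * (G Dp * G D0) = P h * SA * (4 * G Dp * G D0) / 4);
      last by field.
    by rewrite ler_pM2r.
  rewrite (_ : P h * G h * T = P h * G h * (4 * T) / 4); last by field.
  rewrite ler_pM2r // (_ : P h * SA * (G h * SB) = P h * G h * (SA * SB)) //.
  by ring.
rewrite (_ : 4 * (psd / sigma2 * (P D0 * G D0)) * (psd / sigma2 * (P Dp * G Dp)) =
  (psd / sigma2) * (psd / sigma2) * (4 * (P D0 * P Dp) * (G Dp * G D0))); last by ring.
rewrite (_ : psd / sigma2 * (P h * G h) *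
   (psd / sigma2 * (P d1 * G d1) + psd / sigma2 * (P d2 * G d2) +
    psd / sigma2 * (P d3 * G d3) + psd / sigma2 * (P d4 * G d4)) =
  (psd / sigma2) * (psd / sigma2) * (P h * G h * T)); last by rewrite /T; ring.
by apply: ler_wpM2l => //; rewrite mulr_ge0 // ltW.
Qed.

Lemma INR_sumE {R : realType} (psd sigma2 alpha : R) ws wg Delta h x y :
  INR_sum psd sigma2 alpha ws wg Delta h x y =
  (\esum_(p in interferers) (Ff psd sigma2 alpha ws wg h (Dist Delta h p.1 p.2 x y))%:E)%E.
Proof. by []. Qed.

Lemma SNRE {R : realType} (psd sigma2 alpha : R) ws wg Delta h x y :
  SNR psd sigma2 alpha ws wg Delta h x y =
  Ff psd sigma2 alpha ws wg h (Dist Delta h 0 0 x y).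
Proof. by []. Qed.

Lemma esum_rx {R : realType} (F : R -> R) (Delta h x y : R) :
  (\esum_(p in interferers) (F (Dist Delta h p.1 p.2 (- x) y))%:E =
   \esum_(p in interferers) (F (Dist Delta h p.1 p.2 x y))%:E)%E.
Proof.
rewrite (reindex_esum interferers interferers rx _ interf_rx) /=.
by apply: eq_esum => p _; rewrite /rx /= Dist_rx opprK.
Qed.

Lemma esum_ry {R : realType} (F : R -> R) (Delta h x y : R) :
  (\esum_(p in interferers) (F (Dist Delta h p.1 p.2 x (- y)))%:E =
   \esum_(p in interferers) (F (Dist Delta h p.1 p.2 x y))%:E)%E.
Proof.
rewrite (reindex_esum interferers interferers ry _ interf_ry) /=.
by apply: eq_esum => p _; rewrite /ry /= Dist_ry opprK.
Qed.

Lemma frac_le {R : realType} (a b c d : R) : 0 < c -> 0 < d ->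
  a * d <= b * c -> a / c <= b / d.
Proof.
move=> c0 d0 H; rewrite ler_pdivrMr // mulrAC ler_pdivlMr //.
Qed.

Lemma fin_of {R : realType} (e : \bar R) : (0 <= e)%E -> (e < +oo)%E ->
  e = (fine e)%:E.
Proof. by move=> e0 eoo; rewrite fineK // ge0_fin_numE. Qed.

Lemma cell_lemma {R : realType} (Delta h alpha psd sigma2 : R)
  (ws wg : R -> R)
  (hDelta : 0 < Delta) (hh : 0 < h) (halpha : 2 <= alpha)
  (hpsd : 0 < psd) (hsigma : 0 < sigma2)
  (hws : forall t, 0 <= t <= pi -> 0 < ws t <= 1)
  (hwg : forall t, 0 <= t <= pi -> 0 < wg t <= 1)
  (hfinite : forall x y : R,
     (INR_sum psd sigma2 alpha ws wg Delta h x y < +oo)%E)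
  (hmono : forall a b : R, 0 <= a -> a <= b -> b <= pi ->
     ws b * wg b <= ws a * wg a)
  (hconvx : forall i j : int, (i - j = 0 %[mod 2])%Z ->
     forall y : R, - (Delta * Num.sqrt 3 / 2) <= y <= Delta * Num.sqrt 3 / 2 ->
     convex_on (fun x => Wgain ws wg Delta h i j x y / Wgain ws wg Delta h 0 0 x y)
               (- (Delta / 2)) (Delta / 2))
  (hconvy : forall i j : int, (i - j = 0 %[mod 2])%Z ->
     forall x : R, - (Delta / 2) <= x <= Delta / 2 ->
     convex_on (fun y => Wgain ws wg Delta h i j x y / Wgain ws wg Delta h 0 0 x y)
               (- (Delta * Num.sqrt 3 / 2)) (Delta * Num.sqrt 3 / 2))
  (x y : R)
  (hx : - (Delta / 2) <= x <= Delta / 2)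
  (hy : - (Delta * Num.sqrt 3 / 2) <= y <= Delta * Num.sqrt 3 / 2) :
  SINR psd sigma2 alpha ws wg Delta h x y <= SINR psd sigma2 alpha ws wg Delta h 0 0.
Proof.
set F := Ff psd sigma2 alpha ws wg h.
have a0 : 0 <= alpha by apply: le_trans halpha.
have Fpos : forall d, h <= d -> 0 < F d by move=> d; exact: F_pos.
have F0 : forall d, h <= d -> (0 <= (F d)%:E)%E by move=> d hd; rewrite lee_fin ltW ?Fpos.
set D0 := Dist Delta h 0 0 x y.
have hD0 : h <= D0 by exact: Dist_ge.
have S0 : SNR psd sigma2 alpha ws wg Delta h 0 0 = F h by rewrite SNRE Dist00.
have S1 : SNR psd sigma2 alpha ws wg Delta h x y = F D0 by rewrite SNRE.
set E := fun x y => (\esum_(p in interferers) (F (Dist Delta h p.1 p.2 x y))%:E)%E.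
have Ege0 : forall x y, (0 <= E x y)%E.
  by move=> x' y'; apply: esum_ge0 => p _; apply: F0; exact: Dist_ge.
have EF : forall x y, E x y = (INR psd sigma2 alpha ws wg Delta h x y)%:E.
  move=> x' y'; have := Ege0 x' y'; rewrite /E /INR -INR_sumE => H.
  exact: fin_of H (hfinite _ _).
have key : ((4 * F D0 / F h)%:E * E 0%R 0%R <=
            E x y + E (- x)%R y + E x (- y)%R + E (- x)%R (- y)%R)%E.
  rewrite /E -esum_scale; last 2 first.
  - by apply: mulr_gt0; [apply: mulr_gt0 => //; exact: Fpos | rewrite invr_gt0; exact: Fpos].
  - by move=> p; apply: F0; exact: Dist_ge.
  have NN : forall u v p, (0 <= (F (Dist Delta h p.1 p.2 u v))%:E)%E.
    by move=> u v p; apply: F0; exact: Dist_ge.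
  rewrite -!esumD; try by move=> p _; rewrite ?adde_ge0.
  apply: le_esum => p [/= Lp _].
  rewrite -!EFinD -EFinM lee_fin.
  have := @cell_term _ _ _ _ _ _ _ _ hDelta hh halpha hpsd hsigma hws hwg hmono hconvx hconvy _ _ Lp _ _ hx hy.
  rewrite -/F -/D0 => H.
  rewrite mulrAC ler_pdivrMr ?Fpos // [_ * F h]mulrC; exact: H.
have ex : E (- x)%R y = E x y by rewrite /E esum_rx.
have ey : forall u, E u (- y)%R = E u y by move=> u; rewrite /E esum_ry.
move: key; rewrite ey ey ex !EF -!EFinD -EFinM lee_fin => key.
set I0 := INR psd sigma2 alpha ws wg Delta h 0 0.
set I1 := INR psd sigma2 alpha ws wg Delta h x y.
move: key; rewrite -/I0 -/I1 => key.
have I0ge : 0 <= I0 by have := Ege0 0%R 0%R; rewrite EF lee_fin.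
have I1ge : 0 <= I1 by have := Ege0 x y; rewrite EF lee_fin.
have FD0 := Fpos _ hD0; have Fh := Fpos _ (lexx h).
have key2 : F D0 * I0 <= F h * I1.
  have E1 : F D0 * I0 = F h / 4 * (4 * F D0 / F h * I0) by field; rewrite gt_eqF.
  rewrite E1 (_ : F h * I1 = F h / 4 * (I1 + I1 + I1 + I1)); last by field.
  by rewrite ler_pM2l // divr_gt0.
have Fle : F D0 <= F h by apply: F_anti => //; exact: lexx.
rewrite /SINR S0 S1 -/I0 -/I1; apply: frac_le.
- by rewrite ltr_pwDr.
- by rewrite ltr_pwDr.
- lra.
Qed.

Lemma int_cases (a : int) : (2 <= a)%R \/ (a <= -2)%R \/ a = -1 \/ a = 0 \/ a = 1.
Proof. lia. Qed.

Lemma intR_ge {R : realType} (c : nat) (a : int) : (c%:Z <= a)%R -> (c%:R : R) <= a%:~R.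
Proof. by move=> H; rewrite -[c%:R]/(c%:Z%:~R) ler_int. Qed.

Lemma intR_le {R : realType} (c : nat) (a : int) : (a <= - c%:Z)%R -> a%:~R <= - (c%:R : R).
Proof. by move=> H; rewrite -[c%:R]/(c%:Z%:~R) -mulrNz ler_int. Qed.

Lemma odd_nz (a b m : int) : a = b + 2 * m -> a = 1 \/ a = -1 -> b <> 0.
Proof. lia. Qed.

Lemma norm_exists {R : realType} (X Y : R) :
  exists a b : int, (a - b = 0 %[mod 2])%Z /\
    -1 <= X - a%:~R <= 1 /\ -1 <= Y - b%:~R <= 1 /\
    (X - a%:~R) ^+ 2 + 3 * (Y - b%:~R) ^+ 2 <= X ^+ 2 + 3 * Y ^+ 2.
Proof.
set b := Num.floor (Y + 1 / 2).
set m := Num.floor ((X - b%:~R + 1) / 2).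
set a := b + 2 * m.
have Lab : (a - b = 0 %[mod 2])%Z.
  apply/lat_dvd; rewrite /a (_ : b + 2 * m - b = 2 * m); last by ring.
  by apply: dvdz_mulr; exact: dvdzz.
have hb1 := floor_le (Y + 1 / 2); have hb2 := floorD1_gt (Y + 1 / 2).
have hm1 := floor_le ((X - b%:~R + 1) / 2); have hm2 := floorD1_gt ((X - b%:~R + 1) / 2).
rewrite -/b in hb1 hb2; rewrite -/m in hm1 hm2.
rewrite intrD in hb2; rewrite intrD in hm2.
have ea : a%:~R = b%:~R + 2 * m%:~R :> R by rewrite /a intrD intrM.
set u := Y - b%:~R; set t := X - a%:~R.
have hu : -1/2 <= u < 1/2 by apply/andP; split; rewrite /u; lra.
have ht : -1 <= t < 1.
  apply/andP; split; rewrite /t ea.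
  - move: hm2; rewrite ltr_pdivrMr //; lra.
  - move: hm1; rewrite ler_pdivlMr //; lra.
have eX : X = a%:~R + t by rewrite /t; ring.
have eY : Y = b%:~R + u by rewrite /u; ring.
set A := (a%:~R : R); set B := (b%:~R : R).
have KB : 0 <= 3 * B ^+ 2 + 6 * B * u.
  move: (hu) => /andP[hu1 hu2].
  case: (int_cases b) => [h2|[h2|[h2|[h2|h2]]]].
  - have := @intR_ge R 2 b h2; rewrite -/B => H.
    rewrite (_ : 3 * B ^+ 2 + 6 * B * u = 3 * (B * (B + 2 * u))); last by ring.
    by rewrite mulr_ge0 //; apply: mulr_ge0; lra.
  - have := @intR_le R 2 b h2; rewrite -/B => H.
    rewrite (_ : 3 * B ^+ 2 + 6 * B * u = 3 * ((- B) * (- B - 2 * u))); last by ring.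
    by rewrite mulr_ge0 //; apply: mulr_ge0; lra.
  - by move: h2; rewrite /B => ->; lra.
  - by move: h2; rewrite /B => ->; lra.
  - by move: h2; rewrite /B => ->; lra.
case: (lerP 0 (A ^+ 2 + 2 * A * t + 3 * B ^+ 2 + 6 * B * u)) => K.
  exists a, b; split => //; split.
    by apply/andP; split; rewrite -/A -/t; lra.
  split; first by apply/andP; split; rewrite -/B -/u; lra.
  rewrite -/A -/B -/t -/u eX eY; lra.
have eab : a = b + 2 * m by [].
have Fin : A = 1 \/ A = -1 -> B = 1 \/ B = -1 ->
    exists a0 b0 : int, (a0 - b0 = 0 %[mod 2])%Z /\
    -1 <= X - a0%:~R <= 1 /\ -1 <= Y - b0%:~R <= 1 /\
    (X - a0%:~R) ^+ 2 + 3 * (Y - b0%:~R) ^+ 2 <= X ^+ 2 + 3 * Y ^+ 2.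
  move=> ha hb; exists 0, 0; split; first by [].
  rewrite !mulr0z !subr0; split; last split; last by lra.
  - move: K; rewrite eX -/A.
    move: ht => /andP[? ?]; move: hu => /andP[? ?].
    case: ha => ->; case: hb => ->; move=> K; apply/andP; split; lra.
  - move: K; rewrite eY -/B.
    move: ht => /andP[? ?]; move: hu => /andP[? ?].
    case: ha => ->; case: hb => ->; move=> K; apply/andP; split; lra.
move: (ht) (hu) => /andP[ht1 ht2] /andP[hu1 hu2].
case: (int_cases a) => [h2|[h2|[h2|[h2|h2]]]].
- have := @intR_ge R 2 a h2; rewrite -/A => H.
  have P1 : 0 <= A ^+ 2 + 2 * A * t.
    rewrite (_ : _ + _ = A * (A + 2 * t)); last by ring.
    by apply: mulr_ge0; lra.
  by have := addr_ge0 P1 KB; rewrite !addrA leNgt K.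
- have := @intR_le R 2 a h2; rewrite -/A => H.
  have P1 : 0 <= A ^+ 2 + 2 * A * t.
    rewrite (_ : _ + _ = (- A) * (- A - 2 * t)); last by ring.
    by apply: mulr_ge0; lra.
  by have := addr_ge0 P1 KB; rewrite !addrA leNgt K.
- have bn0 : b <> 0 by exact: (odd_nz _ _ _ eab (or_intror h2)).
  case: (int_cases b) => [h3|[h3|[h3|[h3|h3]]]].
  + have := @intR_ge R 2 b h3; rewrite -/B => H.
    have P1 : 6 <= 3 * B ^+ 2 + 6 * B * u.
      have : 2 * 1 <= B * (B + 2 * u) by apply: ler_pM; lra.
      rewrite mulr1 (_ : 3 * B ^+ 2 + 6 * B * u = 3 * (B * (B + 2 * u))); last by ring.
      lra.
    have LA : -1 <= A ^+ 2 + 2 * A * t.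
      have eA : A = a%:~R by [].
      rewrite eA h2 ?intrN expr2; lra.
    have := lerD LA P1; rewrite !addrA => S.
    have S2 := le_lt_trans S K; exfalso; move: S2; lra.
  + have := @intR_le R 2 b h3; rewrite -/B => H.
    have P1 : 6 <= 3 * B ^+ 2 + 6 * B * u.
      have : 2 * 1 <= (- B) * (- B - 2 * u) by apply: ler_pM; lra.
      rewrite mulr1 (_ : 3 * B ^+ 2 + 6 * B * u = 3 * ((- B) * (- B - 2 * u))); last by ring.
      lra.
    have LA : -1 <= A ^+ 2 + 2 * A * t.
      have eA : A = a%:~R by [].
      rewrite eA h2 ?intrN expr2; lra.
    have := lerD LA P1; rewrite !addrA => S.
    have S2 := le_lt_trans S K; exfalso; move: S2; lra.
  + by apply: Fin; [right; rewrite /A h2 ?intrN|right; rewrite /B h3 ?intrN].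
  + by case: bn0.
  + by apply: Fin; [right; rewrite /A h2 ?intrN|left; rewrite /B h3 ?intrN].
- have LA : 0 <= A ^+ 2 + 2 * A * t.
    have eA : A = 0 by rewrite /A h2.
    by rewrite eA expr2; lra.
  have := lerD LA KB; rewrite !addrA => S.
  have S2 := le_lt_trans S K; exfalso; move: S2; lra.
- have bn0 : b <> 0 by exact: (odd_nz _ _ _ eab (or_introl h2)).
  case: (int_cases b) => [h3|[h3|[h3|[h3|h3]]]].
  + have := @intR_ge R 2 b h3; rewrite -/B => H.
    have P1 : 6 <= 3 * B ^+ 2 + 6 * B * u.
      have : 2 * 1 <= B * (B + 2 * u) by apply: ler_pM; lra.
      rewrite mulr1 (_ : 3 * B ^+ 2 + 6 * B * u = 3 * (B * (B + 2 * u))); last by ring.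
      lra.
    have LA : -1 <= A ^+ 2 + 2 * A * t.
      have eA : A = a%:~R by [].
      rewrite eA h2 ?intrN expr2; lra.
    have := lerD LA P1; rewrite !addrA => S.
    have S2 := le_lt_trans S K; exfalso; move: S2; lra.
  + have := @intR_le R 2 b h3; rewrite -/B => H.
    have P1 : 6 <= 3 * B ^+ 2 + 6 * B * u.
      have : 2 * 1 <= (- B) * (- B - 2 * u) by apply: ler_pM; lra.
      rewrite mulr1 (_ : 3 * B ^+ 2 + 6 * B * u = 3 * ((- B) * (- B - 2 * u))); last by ring.
      lra.
    have LA : -1 <= A ^+ 2 + 2 * A * t.
      have eA : A = a%:~R by [].
      rewrite eA h2 ?intrN expr2; lra.
    have := lerD LA P1; rewrite !addrA => S.
    have S2 := le_lt_trans S K; exfalso; move: S2; lra.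
  + by apply: Fin; [left; rewrite /A h2 ?intrN|right; rewrite /B h3 ?intrN].
  + by case: bn0.
  + by apply: Fin; [left; rewrite /A h2 ?intrN|left; rewrite /B h3 ?intrN].
Qed.

Lemma lat_add (i j a b : int) : (i - j = 0 %[mod 2])%Z -> (a - b = 0 %[mod 2])%Z ->
  ((i + a) - (j + b) = 0 %[mod 2])%Z.
Proof.
move=> /lat_dvd H1 /lat_dvd H2; apply/lat_dvd.
have -> : (i + a) - (j + b) = (i - j) + (a - b) by ring.
exact: rpredD.
Qed.

Lemma lat_neg (a b : int) : (a - b = 0 %[mod 2])%Z -> (- a - - b = 0 %[mod 2])%Z.
Proof. by move=> H; apply: lat_negy; apply: lat_negx. Qed.

Lemma bij_shift (a b : int) : (a - b = 0 %[mod 2])%Z ->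
  set_bij interferers (lattice `\ (- a, - b))
    (fun q : int * int => (q.1 - a, q.2 - b)).
Proof.
move=> Lab; split.
- case=> i j [/= L N]; split; first exact: lat_sub.
  move=> /= [E1 E2]; apply: N.
  by rewrite -(subrK a i) -(subrK b j) E1 E2 !addNr.
- by move=> [i j] [k l] _ _ /= [/subIr -> /subIr ->].
- case=> i j [/= L N]; exists (i + a, j + b); last by rewrite /= !addrK.
  split; first exact: lat_add.
  move=> /= [E1 E2]; apply: N.
  by rewrite -(addrK a i) -(addrK b j) E1 E2 !sub0r.
Qed.

Lemma trans_lemma {R : realType} (Delta h alpha psd sigma2 : R)
  (ws wg : R -> R)
  (hh : 0 < h) (halpha : 2 <= alpha)
  (hpsd : 0 < psd) (hsigma : 0 < sigma2)
  (hws : forall t, 0 <= t <= pi -> 0 < ws t <= 1)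
  (hwg : forall t, 0 <= t <= pi -> 0 < wg t <= 1)
  (hfinite : forall x y : R,
     (INR_sum psd sigma2 alpha ws wg Delta h x y < +oo)%E)
  (hmono : forall a b : R, 0 <= a -> a <= b -> b <= pi ->
     ws b * wg b <= ws a * wg a)
  (a b : int) (Lab : (a - b = 0 %[mod 2])%Z) (x y : R)
  (hD : Dist Delta h 0 0 (x - sat_x Delta a) (y - sat_y Delta b) <= Dist Delta h 0 0 x y) :
  SINR psd sigma2 alpha ws wg Delta h x y <=
  SINR psd sigma2 alpha ws wg Delta h (x - sat_x Delta a) (y - sat_y Delta b).
Proof.
set x' := x - sat_x Delta a; set y' := y - sat_y Delta b.
set F := Ff psd sigma2 alpha ws wg h.
have a0 : 0 <= alpha by apply: le_trans halpha.
have Fpos : forall d, h <= d -> 0 < F d by move=> d; exact: F_pos.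
have NN : forall u v p, (0 <= (F (Dist Delta h p.1 p.2 u v))%:E)%E.
  by move=> u v p; rewrite lee_fin ltW // Fpos // Dist_ge.
set E := fun x y => (\esum_(p in interferers) (F (Dist Delta h p.1 p.2 x y))%:E)%E.
have EF : forall x y, E x y = (INR psd sigma2 alpha ws wg Delta h x y)%:E.
  move=> u v; have : (0 <= E u v)%E by apply: esum_ge0.
  rewrite /E /INR -INR_sumE => H; exact: fin_of H (hfinite _ _).
have key : (E x y + (F (Dist Delta h 0 0 x y))%:E =
            E x' y' + (F (Dist Delta h 0 0 x' y'))%:E)%E.
  have e1 : E x y = (\esum_(r in lattice `\ ((- a)%R, (- b)%R))
                     (F (Dist Delta h r.1 r.2 x' y'))%:E)%E.
    rewrite /E (reindex_esum _ _ _ _ (@bij_shift a b Lab)) /=.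
    by apply: eq_esum => p _; rewrite (Dist_tr _ _ _ _ a b).
  have L0 : lattice (0%R, 0%R) by rewrite /lattice /= subr0.
  have Lb : lattice (- a, - b) by exact: lat_neg.
  have T := @esum_split1 _ _ _ _ (fun r => (F (Dist Delta h r.1 r.2 x' y'))%:E) Lb (fun r _ => NN _ _ r).
  have T2 := @esum_split1 _ _ _ _ (fun r => (F (Dist Delta h r.1 r.2 x' y'))%:E) L0 (fun r _ => NN _ _ r).
  move: T2; rewrite T /= => T2.
  rewrite e1 /E /interferers (Dist_tr _ _ 0 0 a b x y) !sub0r -/x' -/y'.
  by rewrite addeC T2 addeC.
rewrite !EF -!EFinD in key; have {}key := EFin_inj key.
set I1 := INR psd sigma2 alpha ws wg Delta h x y.
set I2 := INR psd sigma2 alpha ws wg Delta h x' y'.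
move: key; rewrite -/I1 -/I2 => key.
have I2ge : 0 <= I2.
  have : (0 <= E x' y')%E by apply: esum_ge0.
  by rewrite EF lee_fin.
have I1ge : 0 <= I1.
  have : (0 <= E x y)%E by apply: esum_ge0.
  by rewrite EF lee_fin.
have hD0 : h <= Dist Delta h 0 0 x' y' by exact: Dist_ge.
set S1 := F (Dist Delta h 0 0 x y).
set S2 := F (Dist Delta h 0 0 x' y').
have S1p : 0 < S1 by apply: Fpos; exact: Dist_ge.
have S2p : 0 < S2 by apply: Fpos.
have Sle : S1 <= S2 by apply: F_anti.
rewrite /SINR !SNRE -/F -/S1 -/S2 -/I1 -/I2; apply: frac_le.
- by rewrite ltr_pwDr.
- by rewrite ltr_pwDr.
have P1 := mulr_ge0 (subr_ge0_R _ _ Sle) (addr_ge0 I2ge ler01).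
have P2 := mulr_ge0 (ltW S2p) (subr_ge0_R _ _ Sle).
have key2 : I1 + S1 = I2 + S2 by exact: key.
have -> : I1 = I2 + S2 - S1 by lra.
move: P1 P2; move: (S1) (S2) (I2) => u v w; lra.
Qed.

Lemma exists_cell {R : realType} (Delta h : R) (hDelta : 0 < Delta) (x y : R) :
  exists a b : int, (a - b = 0 %[mod 2])%Z /\
    - (Delta / 2) <= x - sat_x Delta a <= Delta / 2 /\
    - (Delta * Num.sqrt 3 / 2) <= y - sat_y Delta b <= Delta * Num.sqrt 3 / 2 /\
    Dist Delta h 0 0 (x - sat_x Delta a) (y - sat_y Delta b) <= Dist Delta h 0 0 x y.
Proof.
set c := Delta / 2.
have c0 : 0 < c by rewrite divr_gt0.
have r3 : 0 < Num.sqrt (3 : R) by rewrite sqrtr_gt0.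
set s := Delta * Num.sqrt 3 / 2.
have es : s = c * Num.sqrt 3 by rewrite /s /c; ring.
have s0 : 0 < s by rewrite es mulr_gt0.
have [a [b [Lab [hX [hY hD]]]]] := norm_exists (x / c) (y / s).
exists a, b; split => //.
have ex : x - sat_x Delta a = c * (x / c - a%:~R).
  by rewrite mulrBr [c * (x / c)]mulrC divfK ?gt_eqF // /sat_x /c; ring.
have ey : y - sat_y Delta b = s * (y / s - b%:~R).
  by rewrite mulrBr [s * (y / s)]mulrC divfK ?gt_eqF // /sat_y /s; ring.
rewrite ex ey; split; [|split].
- move: hX => /andP[h1 h2]; apply/andP; split.
  + by rewrite -mulrN1 ler_pM2l.
  + by rewrite -[X in _ <= X]mulr1 ler_pM2l.
- move: hY => /andP[h1 h2]; apply/andP; split.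
  + by rewrite -mulrN1 ler_pM2l.
  + by rewrite -[X in _ <= X]mulr1 ler_pM2l.
rewrite /Dist !sat0x !sat0y ler_sqrt; last by rewrite !addr_ge0 ?sqr_ge0.
rewrite lerD2r !sub0r !sqrrN.
have e3 : s ^+ 2 = 3 * c ^+ 2 by rewrite es exprMn sqr_sqrtr // mulrC.
have ex2 : x = c * (x / c) by rewrite mulrC divfK ?gt_eqF.
have ey2 : y = s * (y / s) by rewrite mulrC divfK ?gt_eqF.
rewrite {2}ex2 {2}ey2.
move: hD; move: (x / c) (y / s) => X Y hD.
have E1 : (c * (X - a%:~R)) ^+ 2 + (s * (Y - b%:~R)) ^+ 2 =
   c ^+ 2 * (X - a%:~R) ^+ 2 + s ^+ 2 * (Y - b%:~R) ^+ 2 by ring.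
have E2 : (c * X) ^+ 2 + (s * Y) ^+ 2 = c ^+ 2 * X ^+ 2 + s ^+ 2 * Y ^+ 2 by ring.
rewrite E1 E2 e3.
have c2 : 0 < c ^+ 2 by rewrite exprn_gt0.
have := ler_wpM2l (ltW c2) hD.
rewrite (_ : c ^+ 2 * ((X - a%:~R) ^+ 2 + 3 * (Y - b%:~R) ^+ 2) =
   c ^+ 2 * (X - a%:~R) ^+ 2 + 3 * c ^+ 2 * (Y - b%:~R) ^+ 2); last by ring.
rewrite (_ : c ^+ 2 * (X ^+ 2 + 3 * Y ^+ 2) = c ^+ 2 * X ^+ 2 + 3 * c ^+ 2 * Y ^+ 2) //.
by ring.
Qed.


Theorem proposition2 (R : realType) (Delta h alpha psd sigma2 : R)
  (ws wg : R -> R)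
  (hDelta : 0 < Delta) (hh : 0 < h) (halpha : 2 <= alpha)
  (hpsd : 0 < psd) (hsigma : 0 < sigma2)
  (hws : forall t, 0 <= t <= pi -> 0 < ws t <= 1)
  (hwg : forall t, 0 <= t <= pi -> 0 < wg t <= 1)
  (hfinite : forall x y : R,
     (INR_sum psd sigma2 alpha ws wg Delta h x y < +oo)%E)
  (hmono : forall a b : R, 0 <= a -> a <= b -> b <= pi ->
     ws b * wg b <= ws a * wg a)
  (hconvx : forall i j : int, (i - j = 0 %[mod 2])%Z ->
     forall y : R, - (Delta * Num.sqrt 3 / 2) <= y <= Delta * Num.sqrt 3 / 2 ->
     convex_on (fun x => Wgain ws wg Delta h i j x y / Wgain ws wg Delta h 0 0 x y)
               (- (Delta / 2)) (Delta / 2))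
  (hconvy : forall i j : int, (i - j = 0 %[mod 2])%Z ->
     forall x : R, - (Delta / 2) <= x <= Delta / 2 ->
     convex_on (fun y => Wgain ws wg Delta h i j x y / Wgain ws wg Delta h 0 0 x y)
               (- (Delta * Num.sqrt 3 / 2)) (Delta * Num.sqrt 3 / 2)) :
  forall x y : R,
    SINR psd sigma2 alpha ws wg Delta h x y <= SINR psd sigma2 alpha ws wg Delta h 0 0.
Proof.
move=> x y.
have [a [b [Lab [hx [hy hD]]]]] := @exists_cell _ Delta h hDelta x y.
apply: le_trans (@trans_lemma _ Delta h alpha psd sigma2 ws wg hh halpha hpsd hsigma
  hws hwg hfinite hmono a b Lab x y hD) _.
exact: (@cell_lemma _ Delta h alpha psd sigma2 ws wg hDelta hh halpha hpsd hsigma hws hwg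
  hfinite hmono hconvx hconvy _ _ hx hy).
Qed.
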